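(* Let $h>0$, let $B\subset\mathbb Z^8_h$ be bounded, and let $f:\overline B\to\mathbb O$. Then $$\int_{\partial B}\mathbf n\,f\,dS=\int_B D^hf\,dV^h,\qquad \int_{\partial B}f\,\mathbf n\,dS=\int_B f D^h\,dV^h,$$ where $D^hf=\sum_{l=0}^7\mathbf e_l\,\partial_l^hf$ and $fD^h=\sum_{l=0}^7(\partial_l^hf)\,\mathbf e_l$.
   Context: $\mathbb O$ is the real octonion algebra with standard basis $\mathbf e_0=1,\mathbf e_1,\dots,\mathbf e_7$. For $h>0$, $\mathbb Z^8_h=(h\mathbb Z)^8\subset\mathbb R^8$, and $e_0,\dots,e_7$ denote the standard unit vectors of $\mathbb R^8$. For $A\subset\mathbb Z^8_h$, $\chi_A$ is the indicator function of $A$. Difference operators: $\partial_l^{+,h}f(x)=(f(x+he_l)-f(x))/h$, $\partial_l^{-,h}f(x)=(f(x)-f(x-he_l))/h$, $\partial_l^h=\frac12(\partial_l^{+,h}+\partial_l^{-,h})$. Let $N(x)=\{x,x\pm he_0,\dots,x\pm he_7\}$. For $B\subset\mathbb Z^8_h$: $\partial B=\{x\in\mathbb Z^8_h:\ N(x)\cap B\neq\emptyset,\ N(x)\cap(\mathbb Z^8_h\setminus B)\neq\emptyset\}$, $\overline B=B\cup\partial B$. Volume integral: $\int_A g\,dV^h=\sum_{x\in A}g(x)h^8$. For $x\in\partial B$ put $\Sigma(x)=\sum_{l=0}^7\big[(\partial_l^{+,h}\chi_B(x))^2+(\partial_l^{-,h}\chi_B(x))^2\big]$ (nonzero on $\partial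 B$), $s(x)=\frac{h^8}{2}\sqrt{\Sigma(x)}$, $n_l^{\pm}(x)=-2\,\partial_l^{\pm,h}\chi_B(x)/\sqrt{\Sigma(x)}$, $\int_{\partial B}g\,dS=\sum_{x\in\partial B}g(x)s(x)$, and the octonionic outward normal is $\mathbf n=\sum_{l=0}^7\frac12(n_l^++n_l^-)\mathbf e_l$. *)

(* Defs.v *)
From HB Require Import structures.
From mathcomp Require Import all_boot all_order all_algebra.
From mathcomp Require Import all_classical all_reals.
Set Implicit Arguments. Unset Strict Implicit. Unset Printing Implicit Defensive.
Import Order.TTheory GRing.Theory Num.Theory.
Local Open Scope classical_set_scope.
Local Open Scope ring_scope.

(* Multiplication table (Baez's convention): e_i^2 = -1 (i <> 0),
   e_i e_j = e_k = - e_j e_i for each cyclic rotation (i,j,k) of the triples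
   below, i.e. e_i e_(i+1) = e_(i+3), indices mod 7 in {1..7}. *)
Definition octo_triples : seq (nat * nat * nat) :=
  [:: (1,2,4); (2,3,5); (3,4,6); (4,5,7); (5,6,1); (6,7,2); (7,1,3)]%N.

Definition octo_oriented : seq (nat * nat * nat) :=
  flatten [seq [:: (t.1.1, t.1.2, t.2); (t.1.2, t.2, t.1.1); (t.2, t.1.1, t.1.2)]
          | t <- octo_triples].

(* octo_tab i j = (s, k) means e_i e_j = (-1)^s e_k *)
Definition octo_tab (i j : nat) : bool * nat :=
  if i == 0%N then (false, j) else
  if j == 0%N then (false, i) else
  if i == j then (true, 0%N) else
  match [seq t.2 | t <- octo_oriented & (t.1.1 == i) && (t.1.2 == j)] with
  | k :: _ => (false, k)
  | [::] =>
    match [seq t.2 | t <- octo_oriented & (t.1.1 == j) && (t.1.2 == i)] with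
    | k :: _ => (true, k)
    | [::] => (false, 0%N)
    end
  end.

Definition octonion (R : realType) := 'rV[R]_8.

Definition obasis (R : realType) (l : 'I_8) : octonion R := delta_mx 0 l.

Definition omul (R : realType) (a b : octonion R) : octonion R :=
  \row_(k < 8) \sum_(i < 8) \sum_(j < 8)
     (if (octo_tab i j).2 == k then
        (-1) ^+ (octo_tab i j).1 * a 0 i * b 0 j else 0).

Definition pt (R : realType) := 'rV[R]_8.

Definition uvec (R : realType) (l : 'I_8) : pt R := delta_mx 0 l.

Definition Zh (R : realType) (h : R) : set (pt R) :=
  [set x | forall l : 'I_8, exists k : int, x 0 l = h * k%:~R].

Definition dplus (R : realType) (V : lmodType R) (h : R) (l : 'I_8)
  (g : pt R -> V) (x : pt R) : V := h^-1 *: (g (x + h *: uvec R l) - g x).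
Definition dminus (R : realType) (V : lmodType R) (h : R) (l : 'I_8)
  (g : pt R -> V) (x : pt R) : V := h^-1 *: (g x - g (x - h *: uvec R l)).
Definition dcen (R : realType) (V : lmodType R) (h : R) (l : 'I_8)
  (g : pt R -> V) (x : pt R) : V := 2^-1 *: (dplus h l g x + dminus h l g x).

Definition Nbhd (R : realType) (h : R) (x : pt R) : set (pt R) :=
  [set y | y = x \/ exists l : 'I_8, y = x + h *: uvec R l \/ y = x - h *: uvec R l].

Definition dboundary (R : realType) (h : R) (B : set (pt R)) : set (pt R) :=
  [set x | Zh h x /\ (Nbhd h x `&` B) !=set0 /\
           (Nbhd h x `&` (Zh h `\` B)) !=set0].

Definition dclosure (R : realType) (h : R) (B : set (pt R)) : set (pt R) :=
  B `|` dboundary h B.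

Definition chi (R : realType) (B : set (pt R)) (x : pt R) : R :=
  if `[< B x >] then 1 else 0.

Definition Sigma (R : realType) (h : R) (B : set (pt R)) (x : pt R) : R :=
  \sum_(l < 8) ((dplus (V := R^o) h l (chi B) x) ^+ 2 + (dminus (V := R^o) h l (chi B) x) ^+ 2).

Definition sweight (R : realType) (h : R) (B : set (pt R)) (x : pt R) : R :=
  h ^+ 8 / 2 * Num.sqrt (Sigma h B x).

Definition nplus (R : realType) (h : R) (B : set (pt R)) (l : 'I_8) (x : pt R) : R :=
  - 2 * dplus (V := R^o) h l (chi B) x / Num.sqrt (Sigma h B x).
Definition nminus (R : realType) (h : R) (B : set (pt R)) (l : 'I_8) (x : pt R) : R :=
  - 2 * dminus (V := R^o) h l (chi B) x / Num.sqrt (Sigma h B x).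

Definition onormal (R : realType) (h : R) (B : set (pt R)) (x : pt R) : octonion R :=
  \sum_(l < 8) (2^-1 * (nplus h B l x + nminus h B l x)) *: obasis R l.

Definition vol_int (R : realType) (h : R) (A : set (pt R)) (g : pt R -> octonion R)
  : octonion R := \sum_(x \in A) (h ^+ 8 *: g x).

Definition surf_int (R : realType) (h : R) (B : set (pt R)) (g : pt R -> octonion R)
  : octonion R := \sum_(x \in dboundary h B) (sweight h B x *: g x).

Definition Dh_left (R : realType) (h : R) (f : pt R -> octonion R) (x : pt R)
  : octonion R := \sum_(l < 8) omul (obasis R l) (dcen h l f x).
Definition Dh_right (R : realType) (h : R) (f : pt R -> octonion R) (x : pt R)
  : octonion R := \sum_(l < 8) omul (dcen h l f x) (obasis R l).

Definition bounded_pts (R : realType) (B : set (pt R)) : Prop :=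
  exists M : R, forall x, B x -> forall l : 'I_8, `|x 0 l| <= M.

(* Main.v *)
Require Import Defs.
From HB Require Import structures.
From mathcomp Require Import all_boot all_order all_algebra.
From mathcomp Require Import all_classical all_reals.
From mathcomp Require Import finmap zify ring lra.
Import Order.TTheory GRing.Theory Num.Theory.
Set Implicit Arguments. Unset Strict Implicit. Unset Printing Implicit Defensive.
Local Open Scope classical_set_scope.
Local Open Scope ring_scope.





Lemma omulE (R : realType) (a b : octonion R) k : omul a b 0 k = \sum_(i < 8) \sum_(j < 8)
     (if (octo_tab i j).2 == k then (-1) ^+ (octo_tab i j).1 * a 0 i * b 0 j else 0).
Proof. by rewrite /omul mxE. Qed.

Lemma omulDl (R : realType) (a b c : octonion R) : omul (a + b) c = omul a c + omul b c.
Proof.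
apply/rowP => k; rewrite [LHS]omulE [RHS]mxE !omulE -big_split; apply: eq_bigr => i _.
rewrite -big_split; apply: eq_bigr => j _; rewrite [(a+b) 0 i]mxE.
move: ((-1) ^+ _) => s; case: ifP => _ /=; [ring | by rewrite addr0].
Qed.

Lemma omulDr (R : realType) (a b c : octonion R) : omul a (b + c) = omul a b + omul a c.
Proof.
apply/rowP => k; rewrite [LHS]omulE [RHS]mxE !omulE -big_split; apply: eq_bigr => i _.
rewrite -big_split; apply: eq_bigr => j _; rewrite [(b+c) 0 j]mxE.
move: ((-1) ^+ _) => s; case: ifP => _ /=; [ring | by rewrite addr0].
Qed.

Lemma omulZl (R : realType) (t : R) (a b : octonion R) : omul (t *: a) b = t *: omul a b.
Proof.
apply/rowP => k; rewrite [LHS]omulE [RHS]mxE !omulE mulr_sumr; apply: eq_bigr => i _.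
rewrite mulr_sumr; apply: eq_bigr => j _; rewrite [(t *: a) 0 i]mxE.
move: ((-1) ^+ _) => s; case: ifP => _; [ring | by rewrite mulr0].
Qed.

Lemma omulZr (R : realType) (t : R) (a b : octonion R) : omul a (t *: b) = t *: omul a b.
Proof.
apply/rowP => k; rewrite [LHS]omulE [RHS]mxE !omulE mulr_sumr; apply: eq_bigr => i _.
rewrite mulr_sumr; apply: eq_bigr => j _; rewrite [(t *: b) 0 j]mxE.
move: ((-1) ^+ _) => s; case: ifP => _; [ring | by rewrite mulr0].
Qed.


Lemma Sigma_ge0 (R : realType) (h : R) B x : 0 <= Sigma h B x.
Proof. by apply: sumr_ge0 => l _; apply: addr_ge0; apply: sqr_ge0. Qed.

Lemma d_zero (R : realType) (h : R) B x l : Num.sqrt (Sigma h B x) = 0 ->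
  dplus (V := R^o) h l (chi B) x = 0 /\ dminus (V := R^o) h l (chi B) x = 0.
Proof.
move/eqP; rewrite sqrtr_eq0 => H.
have S0 : Sigma h B x = 0 by apply/eqP; rewrite eq_le H Sigma_ge0.
have := psumr_eq0P (fun i _ => addr_ge0 (sqr_ge0 _) (sqr_ge0 _)) S0 (i := l) isT.
move: (dplus _ _ _ _) (dminus _ _ _ _) => p q E.
by split; nra.
Qed.

Lemma stepA (R : realType) (h : R) B (m : octonion R -> octonion R -> octonion R)
 (mDl : forall a b c, m (a + b) c = m a c + m b c)
 (mZl : forall t a c, m (t *: a) c = t *: m a c) x g :
 sweight h B x *: m (onormal h B x) g =
   - h ^+ 8 *: \sum_(l < 8) dcen (V := R^o) h l (chi B) x *: m (obasis R l) g.
Proof.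
have m0 c : m 0 c = 0 by have := mZl 0 0 c; rewrite !scale0r.
rewrite /onormal (big_morph (m^~ g) (fun a b => mDl a b g) (m0 g)).
rewrite !scaler_sumr; apply: eq_bigr => l _; rewrite mZl !scalerA; congr (_ *: _).
rewrite /sweight /nplus /nminus /dcen.
have [sq0|sq0] := eqVneq (Num.sqrt (Sigma h B x)) 0.
  have [E1 E2] := @d_zero _ h B x l sq0.
  rewrite E1 E2 sq0. by rewrite !(mulr0, mul0r, addr0, scaler0).
move: (dplus _ _ _ _) (dminus _ _ _ _) (Num.sqrt _) sq0 => p q s s0.
change (2^-1 *: (p + q)) with (2^-1 * (p + q) : R).
by field.
Qed.

Lemma Zh_shift (R : realType) (h : R) (x : pt R) l : Zh h x ->
  Zh h (x + h *: uvec R l) /\ Zh h (x - h *: uvec R l).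
Proof.
move=> Hx; split=> m; rewrite !mxE; have [k ->] := Hx m.
  exists (k + (((0:'I_1) == 0) && (m == l) : nat)%:Z); rewrite intrD mulrDr //.
exists (k - (((0:'I_1) == 0) && (m == l) : nat)%:Z); rewrite intrD intrN mulrDr mulrN //.
Qed.

Definition wv (R : realType) (h : R) (o : option ('I_8 * bool)) : pt R :=
  if o is Some (l, b) then (if b then h *: uvec R l else - (h *: uvec R l)) else 0.

Definition Sset (R : realType) (h : R) (B : set (pt R)) : set (pt R) :=
  (fun p => p.1 + wv h p.2) @` (B `*` [set: option ('I_8 * bool)]).

Lemma Sset_fin (R : realType) (h : R) B : finite_set B -> finite_set (Sset h B).
Proof. by move=> fB; apply: finite_image; apply: finite_setX => //; exact: finite_finset. Qed.

Lemma Sset_mem (R : realType) (h : R) B b o : B b -> Sset h B (b + wv h o).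
Proof. by move=> Bb; exists (b, o). Qed.

Lemma B_Sset (R : realType) (h : R) B : B `<=` Sset h B.
Proof. by move=> b Bb; rewrite -[b]addr0; apply: (Sset_mem _ None). Qed.

Lemma Sset_Zh (R : realType) (h : R) B : B `<=` Zh h -> Sset h B `<=` Zh h.
Proof.
move=> BZ _ [[b o] /= [Bb _] <-] /=; have Zb := BZ b Bb.
case: o => [[l [|]]|] /=; last by rewrite addr0.
  by case: (Zh_shift l Zb).
by case: (Zh_shift l Zb).
Qed.

Lemma bd_Sset (R : realType) (h : R) B : dboundary h B `<=` Sset h B.
Proof.
move=> x [_ [[y [Ny By]] _]].
case: Ny => [Ey|[l [Ey|Ey]]]; subst y; first exact: B_Sset.
  by have := Sset_mem h (Some (l, false)) By; rewrite /= addrK.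
by have := Sset_mem h (Some (l, true)) By; rewrite /= subrK.
Qed.

Lemma B_fin (R : realType) (h : R) B : 0 < h -> B `<=` Zh h -> bounded_pts B ->
  finite_set B.
Proof.
move=> h0 BZ [M HM].
pose N := (Num.truncn (M / h)).+1.
have HN : M / h < N%:R by apply: truncnS_gt.
pose phi (g : {ffun 'I_8 -> 'I_(N + N).+1}) : pt R :=
  \row_l (h * ((g l : nat)%:R - N%:R)).
apply: (@sub_finite_set _ _ (phi @` setT)); last first.
  by apply: finite_image; apply: finite_finset.
move=> x Bx.
have [k Hk] := choice (BZ x Bx).
have kb l : (- (N%:Z) < k l < N%:Z)%R.
  have := HM x Bx l; rewrite Hk normrM gtr0_norm // => H.
  have H2 : `|(k l)%:~R : R| < N%:R.
    by apply: le_lt_trans HN; rewrite ler_pdivlMr // mulrC.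
  move: H2; rewrite ltr_norml => /andP[H3 H4]; apply/andP; split;
    rewrite -(ltr_int R) ?intrN //.
exists [ffun l => inord (absz (k l + N%:Z))] => //.
apply/rowP => l; rewrite !mxE ffunE inordK; last by have := kb l; lia.
rewrite Hk; congr (_ * _).
have E : ((absz (k l + N%:Z))%:Z) = k l + N%:Z by have := kb l; lia.
have -> : ((absz (k l + N%:Z))%:R : R) = (k l + N%:Z)%:~R by rewrite -E.
by rewrite intrD addrK.
Qed.

Lemma chiT (R : realType) (B : set (pt R)) x : B x -> chi B x = 1.
Proof. by move=> Bx; rewrite /chi asboolT. Qed.
Lemma chiF (R : realType) (B : set (pt R)) x : ~ B x -> chi B x = 0.
Proof. by move=> Bx; rewrite /chi asboolF. Qed.

Lemma chi_nb (R : realType) (h : R) B x l : B `<=` Zh h -> Zh h x ->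
  ~ dboundary h B x -> chi B (x + h *: uvec R l) = chi B (x - h *: uvec R l).
Proof.
move=> BZ Zx nb; have [Zp Zm] := Zh_shift l Zx.
case: (pselect (B (x + h *: uvec R l))) => Bp;
  case: (pselect (B (x - h *: uvec R l))) => Bm.
- by rewrite (chiT Bp) (chiT Bm).
- exfalso; apply: nb; split=> //; split.
    by exists (x + h *: uvec R l); split=> //; right; exists l; left.
  by exists (x - h *: uvec R l); split=> //; right; exists l; right.
- exfalso; apply: nb; split=> //; split.
    by exists (x - h *: uvec R l); split=> //; right; exists l; right.
  by exists (x + h *: uvec R l); split=> //; right; exists l; left.
- by rewrite (chiF Bp) (chiF Bm).
Qed.

Lemma dcenE (R : realType) (V : lmodType R) (h : R) l (g : pt R -> V) x :
  dcen h l g x = (2 * h)^-1 *: (g (x + h *: uvec R l) - g (x - h *: uvec R l)).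
Proof. by rewrite /dcen /dplus /dminus -scalerDr addrA subrK scalerA invfM. Qed.

Lemma shift_sum (R : realType) B (f : pt R -> octonion R) (w : pt R)
  (s : {fset pt R}) :
  (forall x, x \notin s -> ~ B x) -> (forall x, x \notin s -> ~ B (x - w)) ->
  \sum_(x <- s) chi B x *: f (x + w) = \sum_(x <- s) chi B (x - w) *: f x.
Proof.
move=> H1 H2.
rewrite -(fsbigTE s (fun x => chi B x *: f (x + w))); last first.
  by move=> i /H1/chiF ->; rewrite scale0r.
rewrite -(fsbigTE s (fun x => chi B (x - w) *: f x)); last first.
  by move=> i /H2/chiF ->; rewrite scale0r.
rewrite [RHS](reindex_fsbigT (fun x => x + w) (fun x => chi B (x - w) *: f x)).
  by apply: eq_fsbigr => x _; rewrite addrK.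
by exists (fun x => x - w) => x; rewrite ?addrK ?subrK.
Qed.

Lemma scR (R : realType) (a b : R) : a *: (b : R^o) = a * b.
Proof. by []. Qed.

Lemma key_id (R : realType) (h : R) B (f : pt R -> octonion R) (s : {fset pt R}) l :
  (forall x, x \notin s -> ~ B x) ->
  (forall x, x \notin s -> ~ B (x - h *: uvec R l)) ->
  (forall x, x \notin s -> ~ B (x + h *: uvec R l)) ->
  \sum_(x <- s) chi B x *: dcen h l f x =
  - \sum_(x <- s) dcen (V := R^o) h l (chi B) x *: f x.
Proof.
move=> H1 H2 H3.
have sh1 := shift_sum (w:=h *: uvec R l) f H1 H2.
have H3' : forall x, x \notin s -> ~ B (x - - (h *: uvec R l)).
  by move=> x; rewrite opprK; exact: H3.
have sh2 := shift_sum (w:=- (h *: uvec R l)) f H1 H3'.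
rewrite opprK in sh2.
under eq_bigr do rewrite dcenE scalerA mulrC -scalerA scalerBr.
under [in RHS]eq_bigr do rewrite dcenE scR -scalerA scalerBl.
rewrite -!scaler_sumr !sumrB sh1 sh2.
by rewrite -[RHS]scalerN opprB.
Qed.

Lemma main_gen (R : realType) (h : R) (B : set (pt R)) (f : pt R -> octonion R)
  (m : octonion R -> octonion R -> octonion R)
  (mDl : forall a b c, m (a + b) c = m a c + m b c)
  (mZl : forall t a c, m (t *: a) c = t *: m a c)
  (mDr : forall a b c, m a (b + c) = m a b + m a c)
  (mZr : forall t a c, m a (t *: c) = t *: m a c) :
  0 < h -> B `<=` Zh h -> bounded_pts B ->
  surf_int h B (fun x => m (onormal h B x) (f x)) =
  vol_int h B (fun x => \sum_(l < 8) m (obasis R l) (dcen h l f x)).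
Proof.
move=> h0 BZ bB.
have fB := B_fin h0 BZ bB.
have fS := Sset_fin h fB.
pose s := fset_set (Sset h B).
have sS x : Sset h B x -> x \in s by move=> Sx; rewrite in_fset_set // in_setE.
have Ss x : x \in s -> Sset h B x by rewrite in_fset_set // in_setE.
have m0r a : m a 0 = 0 by have := mZr 0 a 0; rewrite !scale0r.
rewrite /surf_int (eq_fsbigr (fun x => - h ^+ 8 *:
   \sum_(l < 8) dcen (V := R^o) h l (chi B) x *: m (obasis R l) (f x))); last first.
  by move=> x _; apply: stepA.
rewrite (fsbig_fwiden s (dboundary h B)); first last.
- move=> x [/= xs nbx]; rewrite /preimage /=.
  have Zx := Sset_Zh BZ (Ss x xs).
  rewrite big1 ?scaler0 // => l _.
  by rewrite dcenE (chi_nb l BZ Zx nbx) subrr scaler0 scale0r.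
- exact: fset_uniq.
- by move=> x /bd_Sset /sS.
rewrite /vol_int (eq_fsbigr (fun x => chi B x *: (h ^+ 8 *:
   \sum_(l < 8) m (obasis R l) (dcen h l f x)))); last first.
  by move=> x Bx; rewrite (chiT (set_mem Bx)) scale1r.
rewrite (fsbig_fwiden s B); first last.
- by move=> x [/= xs nBx]; rewrite /preimage /= (chiF nBx) scale0r.
- exact: fset_uniq.
- by move=> x /B_Sset /sS.
rewrite -scaler_sumr.
under [in RHS]eq_bigr do rewrite scalerA mulrC -scalerA scaler_sumr.
rewrite -scaler_sumr exchange_big [in RHS]exchange_big /= scaleNr -scalerN -sumrN.
congr (_ *: _); apply: eq_bigr => l _.
have mlin a (g : pt R -> octonion R) :
  m a (\sum_(x <- s) g x) = \sum_(x <- s) m a (g x).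
  exact: (big_morph (m a) (mDr a) (m0r a)).
under eq_bigr do rewrite -mZr.
under [in RHS]eq_bigr do rewrite -mZr.
rewrite -!mlin -[LHS]scaleN1r -mZr scaleN1r; congr (m _ _).
rewrite key_id ?opprK //.
- by move=> x xn Bx; move: xn; rewrite (sS x (@B_Sset _ h B x Bx)).
- move=> x xn Bx; move: xn; rewrite (sS x) //.
  by have := Sset_mem h (Some (l, true)) Bx; rewrite /= subrK.
- move=> x xn Bx; move: xn; rewrite (sS x) //.
  by have := Sset_mem h (Some (l, false)) Bx; rewrite /= addrK.
Qed.

Unset Implicit Arguments.

Theorem mainTheorem3 (R : realType) (h : R) (B : set (pt R))
  (f : pt R -> octonion R) :
  0 < h -> B `<=` Zh h -> bounded_pts B ->
  surf_int h B (fun x => omul (onormal h B x) (f x)) = vol_int h B (Dh_left h f) /\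
  surf_int h B (fun x => omul (f x) (onormal h B x)) = vol_int h B (Dh_right h f).
Proof.
move=> h0 BZ bB; split.
  exact: (@main_gen R h B f (@omul R) (@omulDl R) (@omulZl R) (@omulDr R) (@omulZr R) h0 BZ bB).
exact: (@main_gen R h B f (fun a b => omul b a)
  (fun a b c => @omulDr R c a b) (fun t a c => @omulZr R t c a)
  (fun a b c => @omulDl R b c a) (fun t a c => @omulZl R t c a) h0 BZ bB).
Qed.
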